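(* Let $\Lambda$ be an artin algebra and let $f: X\to Y$ and $f': X'\to Y$ be epimorphisms of $\Lambda$-modules with $f=f'h$ for some $h: X\to X'$. Let $K=\operatorname{Ker} f$, $K'=\operatorname{Ker} f'$ and let $h': K\to K'$ be the restriction of $h$, so that there is a commutative diagram with exact rows $0\to K\to X\to Y\to 0$ and $0\to K'\to X'\to Y\to 0$ with vertical maps $h', h, 1_Y$. If $f$ is right minimal and $h'$ is a split epimorphism, then $f'$ is right minimal.
   Context: Modules are finite length left $\Lambda$-modules. A map $g: X\to Y$ is right minimal if there is no nonzero direct summand $X''$ of $X$ with $g(X'')=0$. *)

(* Defs.v *)
From HB Require Import structures.
From mathcomp Require Import all_boot all_order all_algebra.
Set Implicit Arguments. Unset Strict Implicit. Unset Printing Implicit Defensive.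
Import GRing.Theory.
Local Open Scope ring_scope.

Definition is_ideal (R : comNzRingType) (I : {pred R}) : Prop :=
  [/\ 0 \in I, (forall x y, x \in I -> y \in I -> x + y \in I)
    & (forall r x, x \in I -> r * x \in I)].

Definition artinian_ring (R : comNzRingType) : Prop :=
  forall I : nat -> {pred R}, (forall n, is_ideal (I n)) ->
    (forall n, {subset I n.+1 <= I n}) ->
    exists N, forall n, (N <= n)%N -> I n =i I N.

Definition artin_algebra (R : comNzRingType) (Lam : algType R) : Prop :=
  artinian_ring R /\
  exists s : seq Lam, forall x : Lam,
    exists c : 'I_(size s) -> R, x = \sum_(i < size s) c i *: s`_i.

Definition submodule (Lam : pzRingType) (M : lmodType Lam) (S : {pred M}) : Prop :=
  [/\ 0 \in S, (forall x y, x \in S -> y \in S -> x + y \in S)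
    & (forall (a : Lam) x, x \in S -> a *: x \in S)].

Definition finite_length (Lam : pzRingType) (M : lmodType Lam) : Prop :=
  exists n : nat, forall (m : nat) (S : nat -> {pred M}),
    (forall i, submodule (S i)) ->
    (forall i, (i < m)%N -> {subset S i <= S i.+1} /\ exists x, x \in S i.+1 /\ x \notin S i) ->
    (m <= n)%N.

Definition direct_summand (Lam : pzRingType) (M : lmodType Lam) (S : {pred M}) : Prop :=
  submodule S /\ exists T : {pred M}, [/\ submodule T,
    (forall x, x \in S -> x \in T -> x = 0)
    & (forall x, exists s t, [/\ s \in S, t \in T & x = s + t])].

Definition right_minimal (Lam : pzRingType) (X Y : lmodType Lam) (g : X -> Y) : Prop :=
  forall S : {pred X}, direct_summand S -> (forall x, x \in S -> g x = 0) ->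
    forall x, x \in S -> x = 0.

(* Main.v *)
Require Import Defs.
From HB Require Import structures.
From Stdlib Require Import ClassicalDescription.
From mathcomp Require Import all_boot all_order all_algebra.
Import GRing.Theory.
Local Open Scope ring_scope.

Theorem lemma7p2 (R : comNzRingType) (Lam : algType R)
  (X X' Y : lmodType Lam)
  (f : {linear X -> Y}) (f' : {linear X' -> Y}) (h : {linear X -> X'}) :
  artin_algebra Lam ->
  finite_length X -> finite_length X' -> finite_length Y ->
  (forall y, exists x, f x = y) ->
  (forall y, exists x', f' x' = y) ->
  (forall x, f x = f' (h x)) ->
  right_minimal f ->
  (* h' : Ker f -> Ker f' (restriction of h) is a split epimorphism:
     there is a module map s : Ker f' -> Ker f with h' \o s = 1 *)
  (exists s : X' -> X,
     [/\ (forall k, f' k = 0 -> f (s k) = 0),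
         (forall k1 k2, f' k1 = 0 -> f' k2 = 0 -> s (k1 + k2) = s k1 + s k2),
         (forall (a : Lam) k, f' k = 0 -> s (a *: k) = a *: s k)
       & (forall k, f' k = 0 -> h (s k) = k)]) ->
  right_minimal f'.
Proof.
move=> _ _ _ _ _ _ hf minf [s [sK sD sZ hs]] S' [[S0 SD SZ] [T' [[T0 TD TZ] STi STd]]] f'S x xS.
have s0 : s 0 = 0.
  have e := sD 0 0 (linear0 f') (linear0 f'); rewrite addr0 in e.
  by apply: (addrI (s 0)); rewrite addr0 -e.
pose P := fun y : X => exists k, k \in S' /\ y = s k.
pose S := [pred y : X | if excluded_middle_informative (P y) then true else false].
have SP y : (y \in S) <-> P y.
  rewrite /S inE; case: excluded_middle_informative => //.
have inS k : k \in S' -> s k \in S by move=> kS; apply/SP; exists k.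
have hS : forall y, y \in S -> y = 0.
  apply: minf.
  - split; [split|].
    + by rewrite -s0; apply: inS.
    + move=> a b /SP[ka [ka1 ->]] /SP[kb [kb1 ->]].
      by rewrite -sD ?f'S //; apply: inS; apply: SD.
    + move=> a y /SP[k [k1 ->]]; rewrite -sZ ?f'S //; apply: inS; exact: SZ.
    exists (fun y : X => h y \in T'); split.
    + split; first by rewrite unfold_in linear0.
      * by move=> a b; rewrite !unfold_in linearD; apply: TD.
      * by move=> a b; rewrite !unfold_in linearZ; apply: TZ.
    + move=> y /SP[k [k1 ->]]; rewrite unfold_in hs ?f'S // => kT.
      by rewrite (STi k k1 kT).
    + move=> y; have [a [b [aS bT hy]]] := STd (h y).
      exists (s a), (y - s a); split; first exact: inS.
      * by rewrite unfold_in linearB hs ?f'S // hy addrC addKr.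
      * by rewrite addrC subrK.
  - by move=> y /SP[k [k1 ->]]; apply: sK; apply: f'S.
by rewrite -(hs x (f'S x xS)) (hS _ (inS x xS)) linear0.
Qed.
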